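(* Let $\alpha\in(0,1)$ and let $\mathbb{Z}$ act on the circle $\mathbb{T}^1=\mathbb{R}/\mathbb{Z}$ by $n.z=z+n\alpha$. Then the warped cone $(t\mathbb{T}^1,d_{\mathbb{Z}})_{t>0}$ is quasi-isometric to the family of tori $(\mathbb{T}^2,\tau d)_{\tau>0}$ if and only if $\alpha$ is a restricted irrational number.
   Context: $\mathbb{T}^1$ carries its standard quotient metric $d$ (circumference $1$) and $\mathbb{T}^2=\mathbb{R}^2/\mathbb{Z}^2$ its standard flat metric $d$; $\tau d$ denotes the metric scaled by $\tau$. $\mathbb{Z}$ is generated by $S=\{\pm1\}$. For $t>0$, $d_{\mathbb{Z}}$ is the largest metric on $\mathbb{T}^1$ with $d_{\mathbb{Z}}(z,z')\le t\,d(z,z')$ and $d_{\mathbb{Z}}(z,z\pm\alpha)\le 1$. Families $\mathcal{X},\mathcal{Y}$ of metric spaces are quasi-isometric if there are an index set $I$, surjections $i\mapsto X_i\in\mathcal{X}$, $i\mapsto Y_i\in\mathcal{Y}$, and maps $f_i:X_i\to Y_i$ which are $(C,A)$-quasi-isometries (i.e. $C^{-1}d-A\le d(f_i\cdot,f_i\cdot)\le Cd+A$ and $A$-neighbourhood of the image is everything) with $C,A$ independent of $i$. An irrational number $\alpha=[a_0;a_1,a_2,\dots]$ (continued fraction expansion) is restricted if the sequence $(a_i)$ is bounded. *)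

(* Defs.v *)
From HB Require Import structures.
From mathcomp Require Import all_boot all_order all_algebra.
From mathcomp Require Import classical_sets reals.
Set Implicit Arguments. Unset Strict Implicit. Unset Printing Implicit Defensive.
Import Order.TTheory GRing.Theory Num.Theory.
Local Open Scope ring_scope.
Local Open Scope classical_set_scope.

Section Defs.
Variable R : realType.

Definition frac (x : R) : R := x - (Num.floor x)%:~R.

Lemma frac_itv (x : R) : (0 <= frac x) && (frac x < 1).
Proof.
rewrite /frac subr_ge0 Num.Theory.floor_le /= ltrBlDr addrC.
by have := Num.Theory.floorD1_gt x; rewrite intrD.
Qed.

(** The circle T^1 = R/Z, represented by its fundamental domain [0,1). *)
Definition T1 := {x : R | (0 <= x) && (x < 1)}.
Definition tpt (x : R) : T1 := exist _ (frac x) (frac_itv x).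

Definition T2 := (T1 * T1)%type.

(** standard quotient metric on T^1 (circumference 1):
    distance from x - y to the nearest integer *)
Definition cdist (x y : R) : R := Num.min (frac (x - y)) (1 - frac (x - y)).
Definition d1 (z z' : T1) : R := cdist (sval z) (sval z').

Definition d2 (p q : T2) : R :=
  Num.sqrt (d1 p.1 q.1 ^+ 2 + d1 p.2 q.2 ^+ 2).

Definition is_metric (X : Type) (d : X -> X -> R) : Prop :=
  (forall x, d x x = 0) /\
  (forall x y, x <> y -> 0 < d x y) /\
  (forall x y, d x y = d y x) /\
  (forall x y z, d x z <= d x y + d y z).

Definition rot (alpha : R) (n : int) (z : T1) : T1 := tpt (sval z + n%:~R * alpha).

(** metrics admissible for the warped metric at parameter t, for the
    generating set S = {1, -1}: d' <= t d and d'(z, s.z) <= 1 *)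
Definition warp_admissible (alpha t : R) (d' : T1 -> T1 -> R) : Prop :=
  is_metric d' /\
  (forall z z', d' z z' <= t * d1 z z') /\
  (forall z, d' z (rot alpha 1 z) <= 1 /\ d' z (rot alpha (-1) z) <= 1).

(** the warped metric d_Z at parameter t: the largest admissible metric,
    i.e. the pointwise supremum of all admissible metrics *)
Definition warped_dist (alpha t : R) (z z' : T1) : R :=
  sup [set d' z z' | d' in warp_admissible alpha t].

Definition qi_map (X Y : Type) (dX : X -> X -> R) (dY : Y -> Y -> R)
  (C A : R) (f : X -> Y) : Prop :=
  (forall x y, C^-1 * dX x y - A <= dY (f x) (f y) <= C * dX x y + A) /\
  (forall y, exists x, dY (f x) y <= A).

(** Quasi-isometry of the families (X, dX s)_{s>0} and (Y, dY s)_{s>0}: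
    an index set I with surjections onto both families (i.e. onto the
    parameter ranges (0,+oo), the families being injectively indexed),
    and uniform (C,A)-quasi-isometries. *)
Definition families_qi (X Y : Type) (dX : R -> X -> X -> R)
  (dY : R -> Y -> Y -> R) : Prop :=
  exists (I : Type) (p q : I -> R),
    (forall i, 0 < p i) /\ (forall t, 0 < t -> exists i, p i = t) /\
    (forall i, 0 < q i) /\ (forall s, 0 < s -> exists i, q i = s) /\
    exists C A : R, 0 < C /\
      forall i, exists f : X -> Y, qi_map (dX (p i)) (dY (q i)) C A f.

(** continued fraction expansion [a_0; a_1, a_2, ...] via the Gauss map:
    x_0 = frac alpha, x_{n+1} = frac (1/x_n); a_0 = floor alpha,
    a_{n+1} = floor (1/x_n). *)
Fixpoint cf_rem (alpha : R) (n : nat) : R :=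
  match n with
  | 0%N => frac alpha
  | m.+1 => frac ((cf_rem alpha m)^-1)
  end.
Definition cf_digit (alpha : R) (n : nat) : int :=
  match n with
  | 0%N => Num.floor alpha
  | m.+1 => Num.floor ((cf_rem alpha m)^-1)
  end.

Definition irrational (alpha : R) : Prop := ~ exists q : rat, alpha = ratr q.

Definition restricted (alpha : R) : Prop :=
  irrational alpha /\ exists M : int, forall n, cf_digit alpha n <= M.

End Defs.

(* Main.v *)
Require Import Defs.
From HB Require Import structures.
From mathcomp Require Import all_boot all_order all_algebra.
From mathcomp Require Import classical_sets reals.
From mathcomp Require Import boolp.
From mathcomp Require Import ring lra zify.
Import Order.TTheory GRing.Theory Num.Theory.
Local Open Scope ring_scope.

Module Helpers.
Set Implicit Arguments. Unset Strict Implicit.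

Section Nrm.
Variable R : realType.
Local Open Scope classical_set_scope.
Local Notation frac := (@Defs.frac R).

Definition nrm (x : R) : R := Num.min (frac x) (1 - frac x).

Lemma frac_ge0 (x : R) : 0 <= frac x.
Proof. by case/andP: (frac_itv x). Qed.
Lemma frac_lt1 (x : R) : frac x < 1.
Proof. by case/andP: (frac_itv x). Qed.

Lemma nrm_le (x : R) (n : int) : nrm x <= `|x - n%:~R|.
Proof.
rewrite /nrm /frac.
have h1 := floor_le x; have h2 := floorD1_gt x.
rewrite intrD in h2.
case: (lerP n (Num.floor x)) => hn.
- have : n%:~R <= (Num.floor x)%:~R :> R by rewrite ler_int.
  move=> hh; rewrite ge_min; apply/orP; left.
  rewrite ger0_norm; lra.
- have : (Num.floor x + 1)%:~R <= n%:~R :> R by rewrite ler_int; lia.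
  rewrite intrD => hh; rewrite ge_min; apply/orP; right.
  rewrite ler0_norm; lra.
Qed.

Lemma nrm_eq (x : R) : exists n : int, nrm x = `|x - n%:~R|.
Proof.
rewrite /nrm /frac.
have h1 := floor_le x; have h2 := floorD1_gt x.
rewrite intrD in h2.
case: (lerP (x - (Num.floor x)%:~R) (1 - (x - (Num.floor x)%:~R))) => h.
- exists (Num.floor x); rewrite ger0_norm //; lra.
- exists (Num.floor x + 1); rewrite intrD ler0_norm; lra.
Qed.

Lemma nrm_ge0 x : 0 <= nrm x.
Proof. have [n ->] := nrm_eq x; exact: normr_ge0. Qed.

Lemma nrm_le_half x : nrm x <= 2^-1.
Proof.
rewrite /nrm; have := frac_ge0 x; have := frac_lt1 x.
case: (lerP (frac x) (1 - frac x)) => h.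
- lra.
- lra.
Qed.

Lemma nrm_abs x : nrm x <= `|x|.
Proof. by have := nrm_le x 0; rewrite subr0. Qed.

Lemma nrm_shift x (n : int) : nrm (x + n%:~R) = nrm x.
Proof.
apply/eqP; rewrite eq_le; apply/andP; split.
- have [m ->] := nrm_eq x.
  have := nrm_le (x + n%:~R) (m + n); rewrite intrD.
  by have -> : x + n%:~R - (m%:~R + n%:~R) = x - m%:~R by ring.
- have [m ->] := nrm_eq (x + n%:~R).
  have := nrm_le x (m - n); rewrite intrB.
  by have -> : x - (m%:~R - n%:~R) = x + n%:~R - m%:~R by ring.
Qed.

Lemma nrm_opp x : nrm (- x) = nrm x.
Proof.
apply/eqP; rewrite eq_le; apply/andP; split.
- have [m ->] := nrm_eq x.
  have := nrm_le (- x) (- m); rewrite intrN.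
  by rewrite -opprD normrN.
- have [m ->] := nrm_eq (- x).
  have := nrm_le x (- m); rewrite intrN.
  have -> : x - - m%:~R = - (- x - m%:~R) :> R by ring.
  by rewrite normrN.
Qed.

Lemma nrm_add x y : nrm (x + y) <= nrm x + nrm y.
Proof.
have [m ->] := nrm_eq x; have [n ->] := nrm_eq y.
apply: le_trans (nrm_le _ (m + n)) _; rewrite intrD.
have -> : x + y - (m%:~R + n%:~R) = (x - m%:~R) + (y - n%:~R) by ring.
exact: ler_normD.
Qed.

Lemma nrm_sub x y : nrm (x - y) = nrm (y - x).
Proof. by rewrite -nrm_opp opprB. Qed.

Lemma nrm_mul (k : int) x : nrm (k%:~R * x) <= `|k%:~R| * nrm x.
Proof.
have [m ->] := nrm_eq x.
apply: le_trans (nrm_le _ (k * m)) _; rewrite intrM -mulrBr normrM //.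
Qed.

Lemma nrm0_int x : nrm x = 0 -> exists n : int, x = n%:~R.
Proof.
have [m ->] := nrm_eq x => /eqP; rewrite normr_eq0 subr_eq0 => /eqP ->.
by exists m.
Qed.

Lemma nrm_int (n : int) : nrm n%:~R = 0.
Proof.
apply/eqP; rewrite eq_le nrm_ge0 andbT.
by have := nrm_le n%:~R n; rewrite subrr normr0.
Qed.

Lemma frac_def x : exists n : int, frac x = x + n%:~R.
Proof. by exists (- Num.floor x); rewrite /frac intrN. Qed.

Lemma d1_tpt x y : d1 (tpt x) (tpt y) = nrm (x - y).
Proof.
rewrite /d1 /cdist /=. have [m ->] := frac_def x; have [n ->] := frac_def y.
have -> : x + m%:~R - (y + n%:~R) = (x - y) + (m - n)%:~R by rewrite intrB; ring.
by rewrite -/(nrm _) nrm_shift.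
Qed.

Lemma d1E (z z' : T1 R) : d1 z z' = nrm (sval z - sval z').
Proof. by []. Qed.

End Nrm.

Section W.
Variable R : realType.
Local Open Scope classical_set_scope.
Local Notation frac := (@Defs.frac R).
Local Notation rot := (@Defs.rot R).
Variables (alpha t : R).
Hypothesis ht : 0 < t.

Lemma frac_shift y (n : int) : frac (y + n%:~R) = frac y.
Proof.
rewrite /Defs.frac floorDrz ?intr_int // intrKfloor intrD; ring.
Qed.

Lemma frac_id (y : R) : 0 <= y -> y < 1 -> frac y = y.
Proof.
move=> h0 h1; rewrite /Defs.frac (@floor_def _ _ 0) ?subr0 //.
by rewrite add0r h0 h1.
Qed.

Lemma T1_eq (z z' : T1 R) : sval z = sval z' -> z = z'.
Proof.
case: z => x hx; case: z' => y hy /= e; subst y.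
by rewrite (bool_irrelevance hx hy).
Qed.

Lemma sval_ge0 (z : T1 R) : 0 <= sval z.
Proof. by case: z => x /= /andP[]. Qed.
Lemma sval_lt1 (z : T1 R) : sval z < 1.
Proof. by case: z => x /= /andP[]. Qed.

Lemma rot_comp (a b : int) z :
  rot alpha a (rot alpha b z) = rot alpha (b + a) z.
Proof.
apply: T1_eq => /=.
have [m ->] := frac_def (sval z + b%:~R * alpha).
have -> : sval z + b%:~R * alpha + m%:~R + a%:~R * alpha =
          sval z + (b + a)%:~R * alpha + m%:~R by rewrite intrD; ring.
by rewrite frac_shift.
Qed.

Lemma rot0 z : rot alpha 0 z = z.
Proof.
apply: T1_eq => /=; rewrite mul0r addr0 frac_id //.
- exact: sval_ge0.
- exact: sval_lt1.
Qed.

Lemma adm_jump_nat d' : warp_admissible alpha t d' -> forall (n : nat) z,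
  d' z (rot alpha n z) <= n%:R /\ d' z (rot alpha (- n%:Z) z) <= n%:R.
Proof.
move=> [[m0 [mp [ms mt]]] [hb hj]]; elim=> [|n IH] z.
  by rewrite oppr0 rot0 m0.
have [h1 h2] := IH z; split.
- apply: le_trans (mt _ (rot alpha n z) _) _.
  have -> : Posz n.+1 = Posz n + 1 by lia.
  rewrite -(rot_comp 1 n) -natr1. apply: lerD => //; exact: (hj _).1.
- apply: le_trans (mt _ (rot alpha (- n%:Z) z) _) _.
  have -> : (- n.+1%:Z) = (- n%:Z) + (-1) by lia.
  rewrite -(rot_comp (-1) (- n%:Z)) -natr1. apply: lerD => //; exact: (hj _).2.
Qed.

Lemma adm_jump d' (j : int) z : warp_admissible alpha t d' ->
  d' z (rot alpha j z) <= `|j%:~R|.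
Proof.
move=> hd; case: j => n.
- rewrite normr_nat; exact: (adm_jump_nat hd n z).1.
- rewrite NegzE; have := (adm_jump_nat hd n.+1 z).2.
  by rewrite intrN normrN -pmulrn normr_nat.
Qed.

Lemma adm_bound d' z z' (j : int) : warp_admissible alpha t d' ->
  d' z z' <= `|j%:~R| + t * nrm (sval z' - sval z - j%:~R * alpha).
Proof.
move=> hd; have [[m0 [mp [ms mt]]] [hb hj]] := hd.
apply: le_trans (mt _ (rot alpha j z) _) _.
apply: lerD; first exact: adm_jump.
apply: le_trans (hb _ _) _.
rewrite ler_pM2l // d1E /=.
have [m ->] := frac_def (sval z + j%:~R * alpha).
have -> : sval z + j%:~R * alpha + m%:~R - sval z' =
   - (sval z' - sval z - j%:~R * alpha) + m%:~R by ring.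
by rewrite nrm_shift nrm_opp.
Qed.

Lemma W_le z z' (j : int) :
  warped_dist alpha t z z' <= `|j%:~R| + t * nrm (sval z' - sval z - j%:~R * alpha).
Proof.
rewrite /warped_dist.
set E := [set _ | _ in _].
have [->|ne] := eqVneq E set0.
  rewrite sup0; apply: addr_ge0 => //; apply: mulr_ge0; [exact: ltW|exact: nrm_ge0].
apply: ge_sup; first exact/set0P.
by move=> _ [d' hd' <-]; exact: adm_bound.
Qed.

Lemma W_ge d' z z' : warp_admissible alpha t d' -> d' z z' <= warped_dist alpha t z z'.
Proof.
move=> hd; apply: sup_upper_bound; last by exists d'.
split; first by exists (d' z z'); exists d'.
exists (t * d1 z z') => _ [d'' [_ [hb _]] <-]; exact: hb.
Qed.

End W.

Section Lin.
Variable R : realType.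
Local Open Scope classical_set_scope.
Lemma lin2 (X Y c1 c2 B1 B2 : R) : `|c1| <= B1 -> `|c2| <= B2 ->
  `|X * c1 + Y * c2| <= `|X| * B1 + `|Y| * B2.
Proof.
move=> h1 h2; apply: le_trans (ler_normD _ _) _; rewrite !normrM.
by apply: lerD; apply: ler_wpM2l.
Qed.
End Lin.

Section G.
Variable R : realType.
Local Open Scope classical_set_scope.
Local Notation frac := (@Defs.frac R).
Local Notation rot := (@Defs.rot R).
Variables (alpha t : R).
Hypothesis ht : 0 < t.
Variables (k1 m1 k2 m2 : int).
Hypothesis hD : (k1 * m2 - k2 * m1) * (k1 * m2 - k2 * m1) = 1.
Variables (B1 B2 K : R).
Hypothesis hB1 : 0 < B1.
Hypothesis hB2 : 0 < B2.
Hypothesis hk1 : `|k1%:~R| <= B1.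
Hypothesis hk2 : `|k2%:~R| <= B2.
Hypothesis he1 : t * `|k1%:~R * alpha + m1%:~R| <= B1.
Hypothesis he2 : t * `|k2%:~R * alpha + m2%:~R| <= B2.
Hypothesis hK : B1 * B2 <= K * t.

Local Notation K1 := (k1%:~R : R).
Local Notation K2 := (k2%:~R : R).
Local Notation M1 := (m1%:~R : R).
Local Notation M2 := (m2%:~R : R).
Local Notation DD := (K1 * M2 - K2 * M1).

Lemma hDD : DD * DD = 1.
Proof.
have := congr1 (fun z : int => z%:~R : R) hD => /=.
by rewrite !(intrM, intrB) /=.
Qed.

Lemma DDabs : `|DD| = 1.
Proof.
have h := hDD. have : `|DD| * `|DD| = 1 by rewrite -normrM h normr1.
move=> h2; have h3 := normr_ge0 DD.
have h4 : `|DD| <= 1 by nra.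
have h5 : 1 <= `|DD| by nra.
by apply/eqP; rewrite eq_le h4 h5.
Qed.

Definition ga (z : T1 R) : R := - (K2 * DD) * sval z.
Definition gb (z : T1 R) : R := (K1 * DD) * sval z.
Definition rect (z z' : T1 R) : R :=
  B1 * nrm (ga z - ga z') + B2 * nrm (gb z - gb z').

Lemma rect_ge0 z z' : 0 <= rect z z'.
Proof.
by apply: addr_ge0; apply: mulr_ge0; [exact: ltW|exact: nrm_ge0|exact: ltW|exact: nrm_ge0].
Qed.

Lemma G1 z z' : warped_dist alpha t z z' <= 2 * rect z z'.
Proof.
set d := sval z' - sval z.
set A0 := ga z' - ga z; set B0 := gb z' - gb z.
have [p hp] := nrm_eq A0; have [r hr] := nrm_eq B0.
apply: le_trans (W_le alpha ht z z' (p * k1 + r * k2)) _.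
rewrite /rect (nrm_sub (ga z)) (nrm_sub (gb z)) -/A0 -/B0 hp hr.
set X := A0 - p%:~R; set Y := B0 - r%:~R.
have eA : A0 = - (K2 * DD) * d by rewrite /A0 /ga /d; ring.
have eB : B0 = (K1 * DD) * d by rewrite /B0 /gb /d; ring.
have i1 : (p * k1 + r * k2)%:~R = - (X * K1 + Y * K2) :> R.
  by rewrite /X /Y eA eB !(intrD, intrM); ring.
have i2 : d - (p * k1 + r * k2)%:~R * alpha - (p * m1 + r * m2)%:~R =
    X * (K1 * alpha + M1) + Y * (K2 * alpha + M2).
  rewrite /X /Y eA eB !(intrD, intrM).
  rewrite {1}(_ : d = DD * DD * d); last by rewrite hDD mul1r.
  ring.
have l1 : `|(p * k1 + r * k2)%:~R| <= `|X| * B1 + `|Y| * B2 :> R.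
  by rewrite i1 normrN; apply: lin2.
have l2 : t * nrm (d - (p * k1 + r * k2)%:~R * alpha) <= `|X| * B1 + `|Y| * B2.
  apply: le_trans (_ : t * `|X * (K1 * alpha + M1) + Y * (K2 * alpha + M2)| <= _).
    by rewrite ler_pM2l // -i2; apply: nrm_le.
  rewrite -[t]gtr0_norm // -normrM mulrDr !mulrA ![t * _]mulrC -!mulrA.
  by apply: lin2; rewrite normrM gtr0_norm.
lra.
Qed.

Lemma G2_term z z' (j : int) :
  rect z z' <= 2 * K * (`|j%:~R| + t * nrm (sval z' - sval z - j%:~R * alpha)).
Proof.
set d := sval z' - sval z.
have [m hm] := nrm_eq (d - j%:~R * alpha).
rewrite hm; set e := d - j%:~R * alpha - m%:~R.
rewrite /rect (nrm_sub (ga z)) (nrm_sub (gb z)).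
have eA : ga z' - ga z + (DD * K2 * m%:~R - DD * j%:~R * M2) =
   - (DD * (j%:~R * (K2 * alpha + M2) + K2 * e)) by rewrite /ga /e /d; ring.
have eB : gb z' - gb z + (- (DD * K1 * m%:~R) + DD * j%:~R * M1) =
   DD * (j%:~R * (K1 * alpha + M1) + K1 * e) by rewrite /gb /e /d; ring.
have nA : nrm (ga z' - ga z) <= `|j%:~R| * `|K2 * alpha + M2| + `|K2| * `|e|.
  have ec : (((k1 * m2 - k2 * m1) * k2 * m - (k1 * m2 - k2 * m1) * j * m2)%:~R : R)
     = DD * K2 * m%:~R - DD * j%:~R * M2 by rewrite !(intrB, intrM).
  rewrite -(nrm_shift (ga z' - ga z) ((k1 * m2 - k2 * m1) * k2 * m - (k1 * m2 - k2 * m1) * j * m2)).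
  rewrite ec eA.
  apply: le_trans (nrm_abs _) _. rewrite normrN normrM DDabs mul1r.
  by apply: le_trans (ler_normD _ _) _; rewrite !normrM.
have nB : nrm (gb z' - gb z) <= `|j%:~R| * `|K1 * alpha + M1| + `|K1| * `|e|.
  have ec : ((- ((k1 * m2 - k2 * m1) * k1 * m) + (k1 * m2 - k2 * m1) * j * m1)%:~R : R)
     = - (DD * K1 * m%:~R) + DD * j%:~R * M1 by rewrite !(intrD, intrN, intrB, intrM).
  rewrite -(nrm_shift (gb z' - gb z) (- ((k1 * m2 - k2 * m1) * k1 * m) + (k1 * m2 - k2 * m1) * j * m1)).
  rewrite ec eB.
  apply: le_trans (nrm_abs _) _. rewrite normrM DDabs mul1r.
  by apply: le_trans (ler_normD _ _) _; rewrite !normrM.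
have hj := normr_ge0 (j%:~R : R); have hee := normr_ge0 e.
have he1' := normr_ge0 (K1 * alpha + M1); have he2' := normr_ge0 (K2 * alpha + M2).
have hK1 := normr_ge0 K1; have hK2 := normr_ge0 K2.
have s1 : B1 * nrm (ga z' - ga z) <= K * `|j%:~R| + K * t * `|e|.
  apply: le_trans (ler_wpM2l (ltW hB1) nA) _.
  rewrite mulrDr; apply: lerD.
    have hh : B1 * (t * `|K2 * alpha + M2|) <= B1 * B2 by apply: ler_wpM2l => //; exact: ltW.
    have q : B1 * `|K2 * alpha + M2| <= K.
      rewrite -(ler_pM2l ht) mulrCA [t * K]mulrC; exact: le_trans hh hK.
    nra.
  have hh : B1 * `|K2| <= B1 * B2 by apply: ler_wpM2l => //; exact: ltW.
  have hq := le_trans hh hK; nra.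
have s2 : B2 * nrm (gb z' - gb z) <= K * `|j%:~R| + K * t * `|e|.
  apply: le_trans (ler_wpM2l (ltW hB2) nB) _.
  rewrite mulrDr; apply: lerD.
    have hh : B2 * (t * `|K1 * alpha + M1|) <= B2 * B1 by apply: ler_wpM2l => //; exact: ltW.
    have q : B2 * `|K1 * alpha + M1| <= K.
      rewrite -(ler_pM2l ht) mulrCA [t * K]mulrC; rewrite [B2 * B1]mulrC in hh; exact: le_trans hh hK.
    nra.
  have hh : B2 * `|K1| <= B2 * B1 by apply: ler_wpM2l => //; exact: ltW.
  rewrite [B2 * B1]mulrC in hh; have hq := le_trans hh hK; nra.
lra.
Qed.

Lemma Kpos : 0 < K.
Proof.
have h : 0 < B1 * B2 by apply: mulr_gt0.
have h2 : 0 < K * t by exact: lt_le_trans h hK.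
by rewrite pmulr_lgt0 in h2.
Qed.

Lemma nrm0 : nrm (0 : R) = 0.
Proof. by have := nrm_int R 0. Qed.

Definition rho (z z' : T1 R) : R := rect z z' / (2 * K).

Lemma rect_sym z z' : rect z z' = rect z' z.
Proof. by rewrite /rect (nrm_sub (ga z)) (nrm_sub (gb z)). Qed.

Lemma rect_tri z y z' : rect z z' <= rect z y + rect y z'.
Proof.
rewrite /rect.
have e1 : ga z - ga z' = (ga z - ga y) + (ga y - ga z') by ring.
have e2 : gb z - gb z' = (gb z - gb y) + (gb y - gb z') by ring.
rewrite e1 e2.
have h1 := nrm_add (ga z - ga y) (ga y - ga z').
have h2 := nrm_add (gb z - gb y) (gb y - gb z').
have h1' := ler_wpM2l (ltW hB1) h1. have h2' := ler_wpM2l (ltW hB2) h2.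
rewrite !mulrDr in h1' h2'. lra.
Qed.

Lemma rect_pos z z' : z <> z' -> 0 < rect z z'.
Proof.
move=> hne; rewrite lt_def rect_ge0 andbT; apply/eqP => h0.
have n1 := nrm_ge0 (ga z - ga z'); have n2 := nrm_ge0 (gb z - gb z').
have p1 := mulr_ge0 (ltW hB1) n1; have p2 := mulr_ge0 (ltW hB2) n2.
move: h0; rewrite /rect => h0.
have q1 : B1 * nrm (ga z - ga z') = 0 by lra.
have q2 : B2 * nrm (gb z - gb z') = 0 by lra.
move/eqP: q1; rewrite mulf_eq0 (gt_eqF hB1) /= => /eqP /nrm0_int [p hp].
move/eqP: q2; rewrite mulf_eq0 (gt_eqF hB2) /= => /eqP /nrm0_int [r hr].
set d := sval z - sval z'.
have ed : d = (m2 * r + m1 * p)%:~R.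
  rewrite intrD !intrM -hp -hr /ga /gb.
  have -> : M2 * (K1 * DD * sval z - K1 * DD * sval z') +
            M1 * (- (K2 * DD) * sval z - - (K2 * DD) * sval z') = DD * DD * d.
    rewrite /d; ring.
  by rewrite hDD mul1r.
have hz := sval_ge0 z; have hz1 := sval_lt1 z.
have hz' := sval_ge0 z'; have hz1' := sval_lt1 z'.
have : `|d| < 1 by rewrite ltr_norml /d; apply/andP; split; lra.
rewrite ed -intr_norm ltrz1 => hn.
have n0 : m2 * r + m1 * p = 0 by clear -hn; lia.
rewrite n0 in ed. apply: hne; apply: T1_eq; move: ed; rewrite /d => /eqP.
by rewrite subr_eq0 => /eqP.
Qed.

Lemma nrm_rot (j : int) z :
  nrm (sval (rot alpha j z) - sval z - j%:~R * alpha) = 0.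
Proof.
have [m hm] := frac_def (sval z + j%:~R * alpha).
rewrite /= hm (_ : sval z + j%:~R * alpha + m%:~R - sval z - j%:~R * alpha = 0 + m%:~R).
  by rewrite nrm_shift nrm0.
ring.
Qed.

Lemma rho_adm : warp_admissible alpha t rho.
Proof.
have hk := Kpos.
have h2K : 0 < 2 * K by apply: mulr_gt0.
split; [split; [|split; [|split]]|split].
- move=> z; rewrite /rho /rect !subrr nrm0 !mulr0 addr0 mul0r //.
- move=> z z' hne; rewrite /rho; apply: divr_gt0 => //; exact: rect_pos.
- by move=> z z'; rewrite /rho rect_sym.
- move=> x y z; rewrite /rho -mulrDl ler_pM2r ?invr_gt0 //; exact: rect_tri.
- move=> z z'; rewrite /rho ler_pdivrMr // d1E.
  have := G2_term z z' 0; rewrite mul0r subr0 normr0 add0r nrm_sub.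
  move=> h; apply: le_trans h _; rewrite [t * _ * _]mulrC mulrA //.
- move=> z; split; rewrite /rho ler_pdivrMr // mul1r.
  + have := G2_term z (rot alpha 1 z) 1.
    rewrite nrm_rot mulr0 addr0 => h; apply: le_trans h _.
    by rewrite -[X in _ <= X]mulr1 ler_pM2l // -intr_norm.
  + have := G2_term z (rot alpha (-1) z) (-1).
    rewrite nrm_rot mulr0 addr0 => h; apply: le_trans h _.
    by rewrite -[X in _ <= X]mulr1 ler_pM2l // -intr_norm.
Qed.

Lemma G2 z z' : rect z z' <= 2 * K * warped_dist alpha t z z'.
Proof.
have hk := Kpos. have h2K : 0 < 2 * K by apply: mulr_gt0.
have := W_ge z z' rho_adm; rewrite /rho ler_pdivrMr // mulrC //.
Qed.

Lemma G3 (x y : R) : exists z : T1 R,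
  B1 * nrm (ga z - x) + B2 * nrm (gb z - y) <= 2 * K.
Proof.
set E1 := K1 * alpha + M1; set E2 := K2 * alpha + M2.
set X := x * K1 + y * K2.
set n := Num.floor X.
set e := X - n%:~R.
have fe1 := floor_le X; have fe2 := floorD1_gt X; rewrite intrD -/n in fe2.
have e0 : 0 <= e by rewrite /e; lra.
have e1 : e < 1 by rewrite /e; lra.
set z0 := x * E1 + y * E2 - n%:~R * alpha.
exists (tpt z0).
have [j hj] := frac_def z0.
have vz : sval (tpt z0) = z0 + j%:~R by [].
have iA : ga (tpt z0) - x = - (DD * e * E2) +
   (- ((k2 * (k1 * m2 - k2 * m1) * j + (k1 * m2 - k2 * m1) * n * m2)))%:~R.
  apply/eqP; rewrite -subr_eq0; apply/eqP.
  rewrite /ga vz !(intrN, intrD, intrM, intrB).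
  have -> : - (K2 * DD) * (z0 + j%:~R) - x -
     (- (DD * e * E2) + - (K2 * DD * j%:~R + DD * n%:~R * M2)) = (DD * DD - 1) * x.
    by rewrite /z0 /e /X /E1 /E2; ring.
  by rewrite hDD subrr mul0r.
have iB : gb (tpt z0) - y = DD * e * E1 +
   ((k1 * (k1 * m2 - k2 * m1) * j + (k1 * m2 - k2 * m1) * n * m1))%:~R.
  apply/eqP; rewrite -subr_eq0; apply/eqP.
  rewrite /gb vz !(intrN, intrD, intrM, intrB).
  have -> : K1 * DD * (z0 + j%:~R) - y -
     (DD * e * E1 + (K1 * DD * j%:~R + DD * n%:~R * M1)) = (DD * DD - 1) * y.
    by rewrite /z0 /e /X /E1 /E2; ring.
  by rewrite hDD subrr mul0r.
rewrite iA iB !nrm_shift.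
have nA : nrm (- (DD * e * E2)) <= `|E2|.
  apply: le_trans (nrm_abs _) _; rewrite normrN !normrM DDabs mul1r.
  rewrite ger0_norm //; have := normr_ge0 E2; nra.
have nB : nrm (DD * e * E1) <= `|E1|.
  apply: le_trans (nrm_abs _) _; rewrite !normrM DDabs mul1r.
  rewrite ger0_norm //; have := normr_ge0 E1; nra.
have q1 : B1 * `|E2| <= K.
  have hh : B1 * (t * `|E2|) <= B1 * B2 by apply: ler_wpM2l => //; exact: ltW.
  rewrite -(ler_pM2l ht) mulrCA [t * K]mulrC; exact: le_trans hh hK.
have q2 : B2 * `|E1| <= K.
  have hh : B2 * (t * `|E1|) <= B2 * B1 by apply: ler_wpM2l => //; exact: ltW.
  rewrite -(ler_pM2l ht) mulrCA [t * K]mulrC; rewrite [B2 * B1]mulrC in hh; exact: le_trans hh hK.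
have r1 := ler_wpM2l (ltW hB1) nA. have r2 := ler_wpM2l (ltW hB2) nB.
lra.
Qed.

Lemma Gpack :
 [/\ (forall z z', warped_dist alpha t z z' <=
        2 * (B1 * nrm (ga z - ga z') + B2 * nrm (gb z - gb z'))),
     (forall z z', B1 * nrm (ga z - ga z') + B2 * nrm (gb z - gb z') <=
        2 * K * warped_dist alpha t z z') &
     (forall x y, exists z : T1 R,
        B1 * nrm (ga z - x) + B2 * nrm (gb z - y) <= 2 * K)].
Proof.
split; [exact: G1 | exact: G2 | exact: G3].
Qed.

End G.

Section CF.
Variable R : realType.
Local Open Scope classical_set_scope.
Local Notation frac := (@Defs.frac R).
Variable alpha : R.

Fixpoint QQ (n : nat) : int * int := match n with
  | 0%N => (0, 1)
  | n'.+1 => let: (q0, q1) := QQ n' in (q1, cf_digit alpha n'.+1 * q1 + q0) end.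
Fixpoint PP (n : nat) : int * int := match n with
  | 0%N => (1, 0)
  | n'.+1 => let: (q0, q1) := PP n' in (q1, cf_digit alpha n'.+1 * q1 + q0) end.
Definition Qs n := (QQ n).1.
Definition Ps n := (PP n).1.

Lemma Qs0 : Qs 0 = 0. Proof. by []. Qed.
Lemma Qs1 : Qs 1 = 1. Proof. by []. Qed.
Lemma Ps0 : Ps 0 = 1. Proof. by []. Qed.
Lemma Ps1 : Ps 1 = 0. Proof. by []. Qed.
Lemma QsSS n : Qs n.+2 = cf_digit alpha n.+1 * Qs n.+1 + Qs n.
Proof.
rewrite /Qs /=; case: (QQ n) => q0 q1 /=; by [].
Qed.
Lemma PsSS n : Ps n.+2 = cf_digit alpha n.+1 * Ps n.+1 + Ps n.
Proof.
rewrite /Ps /=; case: (PP n) => q0 q1 /=; by [].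
Qed.

Definition dets n := Qs n * Ps n.+1 - Qs n.+1 * Ps n.
Lemma dets_sq n : dets n * dets n = 1.
Proof.
have step : forall m, dets m.+1 = - dets m.
  move=> m; rewrite /dets QsSS PsSS. ring.
elim: n => [|n IH]; first by [].
by rewrite step mulrNN.
Qed.

Local Notation x n := (cf_rem alpha n).
Local Notation a n := (cf_digit alpha n).
Definition beta n := \prod_(i < n) x i.
Definition Ev n := (Qs n)%:~R * alpha - (Ps n)%:~R.
Definition sg (n : nat) : R := (-1) ^+ n.

Lemma betaS n : beta n.+1 = beta n * x n.
Proof. by rewrite /beta big_ord_recr. Qed.

Lemma EvSS n : Ev n.+2 = (a n.+1)%:~R * Ev n.+1 + Ev n.
Proof. rewrite /Ev QsSS PsSS !(intrD, intrM); ring. Qed.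

Hypothesis h0 : 0 < alpha.
Hypothesis h1 : alpha < 1.
Hypothesis hirr : irrational alpha.

Lemma x0E : x 0 = alpha.
Proof. by rewrite /= frac_id // ltW. Qed.

Lemma x_ge0 n : 0 <= x n.
Proof. case: n => [|n] /=; exact: frac_ge0. Qed.
Lemma x_lt1 n : x n < 1.
Proof. case: n => [|n] /=; exact: frac_lt1. Qed.

Lemma a_ge0 n : 0 <= a n.+1.
Proof. by rewrite /= floor_ge0 invr_ge0 x_ge0. Qed.

Lemma xS n : x n.+1 = (x n)^-1 - (a n.+1)%:~R.
Proof. by []. Qed.

Definition Sinv n := [/\ Ev n = sg n.+1 * beta n, Ev n.+1 = sg n.+2 * beta n.+1,
   0 <= Qs n, Qs n <= Qs n.+1 & 1 <= Qs n.+1].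

Lemma Sinv0 : Sinv 0.
Proof.
split => //.
- by rewrite /Ev Qs0 Ps0 /sg /beta big_ord0 /=; ring.
- rewrite /Ev Qs1 Ps1 betaS /beta big_ord0 x0E /sg /=; ring.
Qed.

Lemma x_neq0_of n : Sinv n -> x n != 0.
Proof.
case=> _ hE _ _ hQ; apply/negP => /eqP hx.
rewrite betaS hx mulr0 mulr0 /Ev in hE.
apply: hirr; exists ((Ps n.+1)%:Q / (Qs n.+1)%:Q) => //.
have hq : (Qs n.+1)%:~R != 0 :> R by rewrite intr_eq0; apply/negP => /eqP h; rewrite h in hQ.
rewrite fmorph_div !rmorph_int.
move/eqP: hE; rewrite subr_eq0 => /eqP <-.
by rewrite mulrC mulrA mulVf // mul1r.
Qed.

Lemma SinvS n : Sinv n -> Sinv n.+1.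
Proof.
move=> hS; have hx := x_neq0_of hS.
case: hS => e0 e1 q0 q01 q1.
have xp : 0 < x n by rewrite lt_def hx x_ge0.
have xl := x_lt1 n.
have hxx : (x n)^-1 * x n = 1 by rewrite mulVf.
have ha : 1 <= a n.+1.
  rewrite /= floor_ge_int; change ((1 : R) <= (x n)^-1).
  have : 0 < (x n)^-1 by rewrite invr_gt0.
  nra.
have sg2 : forall k, sg k.+2 = - sg k.+1 by move=> k; rewrite /sg exprS mulN1r.
split.
- exact: e1.
- rewrite EvSS e1 e0 !betaS xS sg2 [sg n.+3]sg2 sg2 opprK.
  field. exact: hx.
- clear -q1; lia.
- rewrite QsSS; clear -ha q1 q0; nia.
- rewrite QsSS; clear -ha q1 q0; nia.
Qed.

Lemma Sinv_all n : Sinv n.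
Proof. elim: n => [|n IH]; [exact: Sinv0 | exact: SinvS]. Qed.

Lemma x_gt0 n : 0 < x n.
Proof. by rewrite lt_def (x_neq0_of (Sinv_all n)) x_ge0. Qed.

Lemma a_ge1 n : 1 <= a n.+1.
Proof.
have xp := x_gt0 n; have xl := x_lt1 n.
rewrite /= floor_ge_int; change ((1 : R) <= (x n)^-1).
have hxx : (x n)^-1 * x n = 1 by rewrite mulVf // gt_eqF.
have : 0 < (x n)^-1 by rewrite invr_gt0.
nra.
Qed.

Lemma Qs_ge0 n : 0 <= Qs n. Proof. by case: (Sinv_all n). Qed.
Lemma Qs_mono n : Qs n <= Qs n.+1. Proof. by case: (Sinv_all n). Qed.
Lemma Qs_ge1 n : 1 <= Qs n.+1. Proof. by case: (Sinv_all n). Qed.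

Lemma beta_gt0 n : 0 < beta n.
Proof.
elim: n => [|n IH]; first by rewrite /beta big_ord0.
by rewrite betaS mulr_gt0 // x_gt0.
Qed.

Lemma Ev_abs n : `|Ev n| = beta n.
Proof.
case: (Sinv_all n) => -> _ _ _ _.
rewrite normrM /sg normrX normrN normr1 expr1n mul1r gtr0_norm //; exact: beta_gt0.
Qed.

Lemma betaSS n : beta n.+2 = beta n - (a n.+1)%:~R * beta n.+1.
Proof.
rewrite !betaS xS; have hx := x_gt0 n.
field; by rewrite gt_eqF.
Qed.

Lemma F4 n : (Qs n.+1)%:~R * beta n + (Qs n)%:~R * beta n.+1 = 1.
Proof.
elim: n => [|n IH].
  by rewrite Qs1 Qs0 /beta big_ord0 mulr1 mul0r addr0.
rewrite QsSS betaSS intrD intrM; apply: (etrans _ IH); ring.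
Qed.

Lemma err_bound n : (Qs n.+1)%:~R * `|Ev n| <= 1.
Proof.
rewrite Ev_abs; have := F4 n.
have : 0 <= (Qs n)%:~R * beta n.+1 :> R.
  apply: mulr_ge0; last exact: ltW (beta_gt0 _).
  by rewrite ler0z Qs_ge0.
lra.
Qed.

Lemma Qs_unb n : (n%:Z <= Qs n.+1)%R.
Proof.
have h : forall m, (m%:Z <= Qs m.+1)%R /\ (m.+1%:Z <= Qs m.+2)%R.
  elim=> [|m [IH1 IH2]].
    split; first by rewrite Qs1.
    rewrite QsSS Qs1 Qs0; have := a_ge1 0; clear; lia.
  split => //.
  rewrite QsSS; have := a_ge1 m.+1; have := Qs_ge1 m; have := Qs_mono m.+1.
  move: IH2; clear; nia.
by case: (h n).
Qed.

End CF.

Section Aux.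
Variable R : realType.
Local Open Scope classical_set_scope.
Local Notation frac := (@Defs.frac R).

Lemma metric_ge0 (X : Type) (d : X -> X -> R) : is_metric d -> forall x y, 0 <= d x y.
Proof.
move=> [m0 [_ [ms mt]]] x y; have := mt x y x; rewrite m0 (ms y x).
move=> h; have : 0 <= d x y + d x y by []. lra.
Qed.

Lemma W_ge0 (alpha t : R) z z' : 0 <= warped_dist alpha t z z'.
Proof.
rewrite /warped_dist; set E := [set _ | _ in _].
have [->|ne] := eqVneq E set0; first by rewrite sup0.
case/set0P: ne => w hw; case: (hw) => d' hd' hw'.
apply: le_trans (_ : w <= _).
  by rewrite -hw'; apply: metric_ge0; case: hd'.
apply: sup_upper_bound => //; split; first by exists w.
exists (t * d1 z z') => _ [d'' [_ [hb _]] <-]; exact: hb.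
Qed.

Lemma sqrt_sum_le (u v : R) : 0 <= u -> 0 <= v -> Num.sqrt (u ^+ 2 + v ^+ 2) <= u + v.
Proof.
move=> hu hv; rewrite -[X in _ <= X]ger0_norm ?addr_ge0 // -sqrtr_sqr ler_sqrt.
  rewrite !expr2; nra.
by rewrite expr2; nra.
Qed.

Lemma sqrt_ge_l (u v : R) : 0 <= u -> u <= Num.sqrt (u ^+ 2 + v ^+ 2).
Proof.
move=> hu; rewrite -{1}[u]ger0_norm // -sqrtr_sqr ler_sqrt.
  rewrite !expr2; nra.
rewrite !expr2; nra.
Qed.

Lemma d2_le (p q : T2 R) : d2 p q <= d1 p.1 q.1 + d1 p.2 q.2.
Proof. apply: sqrt_sum_le; exact: nrm_ge0. Qed.

Lemma d2_ge1 (p q : T2 R) : d1 p.1 q.1 <= d2 p q.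
Proof. apply: sqrt_ge_l; exact: nrm_ge0. Qed.

Lemma d2_ge2 (p q : T2 R) : d1 p.2 q.2 <= d2 p q.
Proof. rewrite /d2 addrC; apply: sqrt_ge_l; exact: nrm_ge0. Qed.

Lemma d2_ge0 (p q : T2 R) : 0 <= d2 p q.
Proof. apply: le_trans (d2_ge1 p q); exact: nrm_ge0. Qed.

Lemma d2_le1 (p q : T2 R) : d2 p q <= 1.
Proof.
apply: le_trans (d2_le p q) _.
have := nrm_le_half (sval p.1 - sval q.1); have := nrm_le_half (sval p.2 - sval q.2).
rewrite /d1 /cdist -!/(nrm _). lra.
Qed.

Lemma d1_tpt_l (u : R) (w : T1 R) : d1 (tpt u) w = nrm (u - sval w).
Proof.
rewrite d1E /=; have [m ->] := frac_def u.
have -> : u + m%:~R - sval w = (u - sval w) + m%:~R by ring.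
by rewrite nrm_shift.
Qed.

Lemma aux1 (G s q na nb : R) : 1 <= G -> 0 < s -> 0 <= na -> 0 <= nb ->
  q <= na + nb -> s * q <= G * s * na + G * s * nb.
Proof.
move=> hG hs ha hb hq.
have e1 : s * q <= s * (na + nb) by rewrite ler_pM2l.
have e0 : 0 <= s * (na + nb) by apply: mulr_ge0; lra.
have e2 : s * (na + nb) <= G * (s * (na + nb)) by nra.
have -> : G * s * na + G * s * nb = G * (s * (na + nb)) by ring.
lra.
Qed.

End Aux.

Section Suff.
Variable R : realType.
Local Open Scope classical_set_scope.
Local Notation frac := (@Defs.frac R).
Variable alpha : R.
Hypothesis h0 : 0 < alpha.
Hypothesis h1 : alpha < 1.
Hypothesis hirr : irrational alpha.

Lemma find_idx (s : R) : 1 <= s ->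
  exists n, (Qs alpha n.+1)%:~R <= s /\ s < (Qs alpha n.+2)%:~R.
Proof.
move=> hs; case: (pselect (exists n, (Qs alpha n.+1)%:~R <= s /\ s < (Qs alpha n.+2)%:~R)) => // hneg.
have all : forall n, (Qs alpha n.+1)%:~R <= s.
  elim=> [|n IH]; first by rewrite Qs1.
  case: (ltrP s (Qs alpha n.+2)%:~R) => // hlt.
  by exfalso; apply: hneg; exists n.
have := Qs_unb h0 h1 hirr (Num.trunc s).+1.
rewrite -(ler_int R) => hh.
have := le_trans hh (all _).
have := truncnS_gt s.
rewrite pmulrn; lra.
Qed.

Lemma dir_suff (M : int) : (forall n, cf_digit alpha n <= M) ->
  families_qi (fun t => @warped_dist R alpha t)
              (fun tau (p q : T2 R) => tau * d2 p q).
Proof.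
move=> hM.
set G : R := 1 + `|M%:~R|.
have G1 : 1 <= G by rewrite /G; have := normr_ge0 (M%:~R : R); lra.
have hMa : forall n, (cf_digit alpha n)%:~R <= G - 1.
  move=> n; have : (cf_digit alpha n)%:~R <= M%:~R :> R by rewrite ler_int.
  have := ler_norm (M%:~R : R); rewrite /G; lra.
set K := G * G.
have Kp : 0 < K by rewrite /K; apply: mulr_gt0; lra.
have GK : G <= K by rewrite /K; nra.
exists R, (fun i => if 0 < i then i else 1), (fun i => Num.sqrt (if 0 < i then i else 1)).
split; [ | split; [|split; [|split]]].
- by move=> i; case: ifP => // _; exact: ltr01.
- by move=> t ht; exists t; rewrite ht.
- by move=> i; rewrite sqrtr_gt0; case: ifP => // _; exact: ltr01.
- move=> s hs; exists (s ^+ 2); rewrite exprn_gt0 // sqrtr_sqr gtr0_norm //.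
exists (4 * K), (4 * K); split; first by apply: mulr_gt0.
move=> i; set t := (if 0 < i then i else 1).
have ht : 0 < t by rewrite /t; case: ifP => // _; exact: ltr01.
set s := Num.sqrt t.
have hs0 : 0 < s by rewrite sqrtr_gt0.
have hst : s * s = t by rewrite -expr2 sqr_sqrtr // ltW.
have C1 : 1 <= 4 * K by lra.
have Cinv : (4 * K)^-1 <= 1 by rewrite invf_le1 //; lra.
have Cinv0 : 0 < (4 * K)^-1 by rewrite invr_gt0; lra.
case: (ltrP t 1) => htl.
- have hs1 : s < 1 by rewrite /s -sqrtr1 ltr_sqrt //.
  exists (fun _ => (tpt (0 : R), tpt (0 : R))); split.
  + move=> x y /=; apply/andP; split.
    * have hW := W_le alpha ht x y 0.
      rewrite normr0 add0r mul0r subr0 in hW.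
      have := nrm_le_half (sval y - sval x).
      have := W_ge0 alpha t x y.
      have := mulr_ge0 (ltW hs0) (d2_ge0 (tpt (0 : R), tpt (0 : R)) (tpt (0 : R), tpt (0 : R))).
      move=> a1 a2 a3.
      have : t * nrm (sval y - sval x) <= 2^-1 by nra.
      move=> a4.
      have : (4 * K)^-1 * warped_dist alpha t x y <= warped_dist alpha t x y.
        by have := W_ge0 alpha t x y; nra.
      lra.
    * have := d2_le1 (tpt (0 : R), tpt (0 : R)) (tpt (0 : R), tpt (0 : R)).
      have := d2_ge0 (tpt (0 : R), tpt (0 : R)) (tpt (0 : R), tpt (0 : R)).
      have := W_ge0 alpha t x y.
      move=> a1 a2 a3.
      have : 0 <= 4 * K * warped_dist alpha t x y by apply: mulr_ge0; lra.
      nra.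
  + move=> y /=; exists (tpt (0 : R)).
    have := d2_le1 (tpt (0 : R), tpt (0 : R)) y; have := d2_ge0 (tpt (0 : R), tpt (0 : R)) y; nra.
- have hs1 : 1 <= s by rewrite /s -sqrtr1 ler_sqrt //; lra.
  have [n [hn1 hn2]] := find_idx hs1.
  set k1 := Qs alpha n.+1; set m1 := - Ps alpha n.+1.
  set k2 := Qs alpha n.+2; set m2 := - Ps alpha n.+2.
  have hD : (k1 * m2 - k2 * m1) * (k1 * m2 - k2 * m1) = 1.
    have := dets_sq alpha n.+1; rewrite /dets -/k1 -/k2 /m1 /m2 => h.
    rewrite -h; ring.
  have hB : 0 < G * s by apply: mulr_gt0 => //; lra.
  have q1ge0 : 0 <= k1%:~R :> R by rewrite ler0z Qs_ge0.
  have hk1 : `|k1%:~R| <= G * s :> R.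
    rewrite ger0_norm //; apply: le_trans hn1 _; rewrite ler_pMl //.
  have hk2 : `|k2%:~R| <= G * s :> R.
    have q0 : (Qs alpha n)%:~R <= k1%:~R :> R by rewrite ler_int Qs_mono.
    have q00 : 0 <= (Qs alpha n)%:~R :> R by rewrite ler0z Qs_ge0.
    have ha := hMa n.+1.
    have ha0 : 0 <= (cf_digit alpha n.+1)%:~R :> R by rewrite ler0z; apply: le_trans (a_ge1 h0 h1 hirr n).
    rewrite /k2 QsSS intrD intrM -/k1 ger0_norm; last by apply: addr_ge0 => //; apply: mulr_ge0.
    nra.
  have hE1 : k1%:~R * alpha + m1%:~R = Ev alpha n.+1 by rewrite /Ev /m1 intrN.
  have hE2 : k2%:~R * alpha + m2%:~R = Ev alpha n.+2 by rewrite /Ev /m2 intrN.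
  have he1 : t * `|k1%:~R * alpha + m1%:~R| <= G * s.
    rewrite hE1; have eb := err_bound h0 h1 hirr n.+1.
    have := normr_ge0 (Ev alpha n.+1).
    move=> a1.
    have : s * `|Ev alpha n.+1| <= 1 by nra.
    rewrite -hst; nra.
  have he2 : t * `|k2%:~R * alpha + m2%:~R| <= G * s.
    rewrite hE2; have eb := err_bound h0 h1 hirr n.+2.
    have q23 : k2%:~R <= (Qs alpha n.+3)%:~R :> R by rewrite ler_int Qs_mono.
    have := normr_ge0 (Ev alpha n.+2).
    move=> a1.
    have : s * `|Ev alpha n.+2| <= 1 by nra.
    rewrite -hst; nra.
  have hK : G * s * (G * s) <= K * t by rewrite /K -hst; lra.
  case: (Gpack ht hD hB hB hk1 hk2 he1 he2 hK) => g1 g2 g3.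
  exists (fun z => (tpt (ga k1 m1 k2 m2 z), tpt (gb k1 m1 k2 m2 z))); split.
  + move=> z z'; rewrite /d2 /= !d1_tpt.
    set na := nrm (ga k1 m1 k2 m2 z - ga k1 m1 k2 m2 z').
    set nb := nrm (gb k1 m1 k2 m2 z - gb k1 m1 k2 m2 z').
    have na0 : 0 <= na by exact: nrm_ge0.
    have nb0 : 0 <= nb by exact: nrm_ge0.
    have s1 := sqrt_sum_le na0 nb0.
    have s2 := sqrt_ge_l nb na0. have s3 := sqrt_ge_l na nb0.
    rewrite addrC in s3.
    have w1 := g1 z z'; have w2 := g2 z z'; have w0 := W_ge0 alpha t z z'.
    rewrite -/na -/nb in w1 w2.
    set q := Num.sqrt (na ^+ 2 + nb ^+ 2) in s1 s2 s3 *.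
    set W := warped_dist alpha t z z' in w0 w1 w2 *.
    apply/andP; split.
    * have hW : W <= 4 * K * (s * q).
        apply: le_trans w1 _.
        have : G * s * na + G * s * nb <= 2 * G * s * q by nra.
        have : 0 <= s * q by nra.
        nra.
      have : (4 * K)^-1 * W <= s * q.
        by rewrite ler_pdivrMl //; lra.
      lra.
    * have := aux1 G1 hs0 na0 nb0 s1.
      have : 0 <= 4 * K * W by apply: mulr_ge0; lra.
      lra.
  + move=> [y1 y2]; have [z hz] := g3 (sval y1) (sval y2).
    exists z; rewrite /d2 /= !d1_tpt_l.
    set na := nrm (ga k1 m1 k2 m2 z - sval y1) in hz *.
    set nb := nrm (gb k1 m1 k2 m2 z - sval y2) in hz *.
    have na0 : 0 <= na by exact: nrm_ge0.
    have nb0 : 0 <= nb by exact: nrm_ge0.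
    have s1 := sqrt_sum_le na0 nb0.
    set q := Num.sqrt (na ^+ 2 + nb ^+ 2) in s1 *.
    have := aux1 G1 hs0 na0 nb0 s1.
    lra.
Qed.

End Suff.

Section Pack.
Variable R : realType.
Local Open Scope classical_set_scope.
Local Notation frac := (@Defs.frac R).

Lemma nrm_frac (a b : R) : nrm (frac a - frac b) = nrm (a - b).
Proof.
have [m ->] := frac_def a; have [n ->] := frac_def b.
have -> : a + m%:~R - (b + n%:~R) = (a - b) + (m - n)%:~R by rewrite intrB; ring.
by rewrite nrm_shift.
Qed.

Lemma nrm_half : 2^-1 <= nrm (2^-1 : R).
Proof.
have [n ->] := nrm_eq (2^-1 : R).
case: (lerP n 0) => hn.
- have : n%:~R <= 0 :> R by rewrite lerz0.
  move=> h; rewrite ger0_norm; lra.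
- have : 1 <= n%:~R :> R by rewrite ler1z; lia.
  move=> h; rewrite ler0_norm; lra.
Qed.

Lemma grid_sep (N i j : nat) : (i < N)%N -> (j < N)%N -> i <> j ->
  1 <= N%:R * nrm (i%:R / N%:R - j%:R / N%:R : R).
Proof.
move=> hi hj hij.
have hN : 0 < N%:R :> R by rewrite ltr0n; lia.
have [n ->] := nrm_eq (i%:R / N%:R - j%:R / N%:R : R).
have e : i%:R / N%:R - j%:R / N%:R - n%:~R = ((i%:Z - j%:Z - n * N%:Z)%:~R : R) / N%:R.
  rewrite !(intrB, intrM) /=.
  rewrite -!pmulrn. field. by rewrite gt_eqF.
rewrite e normrM normfV (gtr0_norm hN) mulrC -mulrA mulVf ?gt_eqF // mulr1.
rewrite -intr_norm ler1z.
have : (i%:Z - j%:Z - n * N%:Z) != 0.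
  apply/eqP => h.
  have : (i%:Z - j%:Z = n * N%:Z) by lia.
  clear -hi hj hij => hh.
  have [hn|[hn|hn]] : (n <= -1 \/ n = 0 \/ 1 <= n)%R by lia.
  + have : (n * N%:Z <= - N%:Z)%R by nia.
    lia.
  + subst n; lia.
  + have : (N%:Z <= n * N%:Z)%R by nia.
    lia.
clear; lia.
Qed.

Lemma cell_close (P : nat) (a b : R) : (0 < P)%N ->
  Num.trunc (P%:R * frac a) = Num.trunc (P%:R * frac b) ->
  P%:R * nrm (a - b) < 1.
Proof.
move=> hP e.
have fa0 := frac_ge0 a; have fb0 := frac_ge0 b.
have hP' : 0 < P%:R :> R by rewrite ltr0n.
have ia := truncn_itv (mulr_ge0 (ltW hP') fa0).
have ib := truncn_itv (mulr_ge0 (ltW hP') fb0).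
rewrite e in ia; case/andP: ia => ia1 ia2; case/andP: ib => ib1 ib2.
rewrite -nrm_frac; apply: le_lt_trans (_ : P%:R * `|frac a - frac b| < 1).
  by rewrite ler_pM2l // nrm_abs.
rewrite -(gtr0_norm hP') -normrM mulrBr ltr_norml.
rewrite -!natr1 in ia2 ib2.
apply/andP; split; lra.
Qed.

Lemma sep_coord (tau A c : R) (N : nat) (a b gu gv : R) : 0 < tau ->
  N%:R * c <= tau -> 1 <= N%:R * nrm (gu - gv) -> tau * nrm (a - gu) <= A ->
  tau * nrm (b - gv) <= A -> 0 <= c -> c - 2 * A <= tau * nrm (a - b).
Proof.
move=> ht hNc hg ha hb hc.
have tri : nrm (gu - gv) <= nrm (gu - a) + nrm (a - b) + nrm (b - gv).
  have -> : gu - gv = (gu - a) + (a - b) + (b - gv) by ring.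
  apply: le_trans (nrm_add _ _) _; rewrite lerD2r; exact: nrm_add.
rewrite (nrm_sub gu a) in tri.
have n0 := nrm_ge0 (gu - gv).
have h1 : c <= tau * nrm (gu - gv).
  have : c * (N%:R * nrm (gu - gv)) <= tau * nrm (gu - gv).
    rewrite mulrA [c * _]mulrC; apply: ler_wpM2r => //.
  have : c <= c * (N%:R * nrm (gu - gv)) by rewrite -{1}[c]mulr1; apply: ler_wpM2l.
  lra.
have := ler_wpM2l (ltW ht) tri; rewrite !mulrDr; lra.
Qed.

Lemma thin_not_qi (alpha : R) :
  (forall R0 : R, 0 < R0 -> exists t : R, exists k1 m1 k2 m2 : int, exists L1 L2 : R,
     0 < t /\ (k1 * m2 - k2 * m1) * (k1 * m2 - k2 * m1) = 1 /\ 1 <= L1 /\ R0 <= L2 /\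
     R0 * L1 <= L2 /\ `|k1%:~R| <= L1 /\ `|k2%:~R| <= L2 /\
     t * `|k1%:~R * alpha + m1%:~R| <= L1 /\
     t * `|k2%:~R * alpha + m2%:~R| <= L2 /\ L1 * L2 <= t) ->
  ~ families_qi (fun t => @warped_dist R alpha t) (fun tau (p q : T2 R) => tau * d2 p q).
Proof.
move=> hthin [I [p [q [hp [hps [hq [hqs [C [A [hC hf]]]]]]]]]].
have hA : 0 <= A.
  have [i _] := hps 1 ltr01. have [f [_ hs]] := hf i.
  have [x hx] := hs (tpt (0:R), tpt (0:R)).
  apply: le_trans hx; apply: mulr_ge0; [exact: ltW (hq i) | exact: d2_ge0].
set c := 3 * A + 4 * C. set c' := 8 * C * c.
have hc : 0 < c by rewrite /c; lra.
have hc' : 0 < c' by rewrite /c'; apply: mulr_gt0 => //; lra.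
have hCA : 0 <= 8 * C * A by apply: mulr_ge0 => //; lra.
have hc2 : 0 <= c' ^+ 2 by exact: sqr_ge0.
set R0 := 16 + 8 * C * A + c' + 4 * c' ^+ 2 + 1.
have hR0 : 0 < R0 by rewrite /R0; lra.
have [t [k1 [m1 [k2 [m2 [L1 [L2 [ht [hD [hL1 [hL2 [hL12 [hk1 [hk2 [he1 [he2 hK]]]]]]]]]]]]]]]] := hthin R0 hR0.
have [i hi] := hps t ht.
have [f [hfd hfs]] := hf i.
rewrite /= hi in hfd hfs.
set tau := q i in hfd hfs.
have htau : 0 < tau := hq i.
have hL1p : 0 < L1 by lra.
have hL2p : 0 < L2 by lra.
have hK' : L1 * L2 <= 1 * t by rewrite mul1r.
case: (Gpack ht hD hL1p hL2p hk1 hk2 he1 he2 hK') => g1 g2 g3.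
have [z0 hz0] := g3 0 0.
have [z1 hz1] := g3 0 (2^-1).
have hW01 : L2 / 4 - 2 <= warped_dist alpha t z0 z1.
  have w2 := g2 z0 z1.
  have tri : nrm (- 2^-1 : R) <= nrm (gb k1 m1 k2 m2 z0 - 0) +
      nrm (gb k1 m1 k2 m2 z0 - gb k1 m1 k2 m2 z1) + nrm (gb k1 m1 k2 m2 z1 - 2^-1).
    have e : (- 2^-1 : R) = (0 - gb k1 m1 k2 m2 z0) +
       (gb k1 m1 k2 m2 z0 - gb k1 m1 k2 m2 z1) + (gb k1 m1 k2 m2 z1 - 2^-1) by ring.
    have t1 := nrm_add (0 - gb k1 m1 k2 m2 z0 + (gb k1 m1 k2 m2 z0 - gb k1 m1 k2 m2 z1))
                       (gb k1 m1 k2 m2 z1 - 2^-1).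
    have t2 := nrm_add (0 - gb k1 m1 k2 m2 z0) (gb k1 m1 k2 m2 z0 - gb k1 m1 k2 m2 z1).
    rewrite -e in t1; rewrite (nrm_sub 0) in t2.
    lra.
  rewrite nrm_opp in tri.
  have nh := nrm_half.
  have tri2 := ler_wpM2l (ltW hL2p) tri. rewrite !mulrDr in tri2.
  have a0 := mulr_ge0 (ltW hL1p) (nrm_ge0 (ga k1 m1 k2 m2 z0 - 0)).
  have a1 := mulr_ge0 (ltW hL1p) (nrm_ge0 (ga k1 m1 k2 m2 z1 - 0)).
  have a2 := mulr_ge0 (ltW hL1p) (nrm_ge0 (ga k1 m1 k2 m2 z0 - ga k1 m1 k2 m2 z1)).
  have nh2 := ler_wpM2l (ltW hL2p) nh.
  rewrite mulr1 in w2.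
  lra.
have htau_lb : L2 / 4 - 2 <= C * (tau + A).
  have := hfd z0 z1; case/andP => hl _.
  have dle := d2_le1 (f z0) (f z1).
  have : tau * d2 (f z0) (f z1) <= tau by rewrite -{2}[tau]mulr1; apply: ler_wpM2l => //; exact: ltW.
  move=> h2.
  have : C^-1 * warped_dist alpha t z0 z1 <= tau + A by lra.
  rewrite ler_pdivrMl //; lra.
set N := Num.trunc (tau / c).
have hN1 : N%:R * c <= tau.
  have := truncn_le (tau / c); rewrite divr_ge0 ?(ltW htau) ?(ltW hc) //.
  by rewrite ler_pdivlMr.
have hN2 : tau < N.+1%:R * c.
  by have := truncnS_gt (tau / c); rewrite ltr_pdivrMr.
have hNL : L2 < c' * N%:R.
  have : 8 * C * tau < c' * N.+1%:R.
    rewrite /c'; have := hN2; nra.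
  move=> h8; rewrite -[N.+1%:R]natr1 mulrDr mulr1 in h8.
  have : 8 * C * A + 16 + c' <= L2 by rewrite /R0 in hL2; lra.
  have : 8 * (C * (tau + A)) = 8 * C * tau + 8 * C * A by ring.
  lra.
have hN0 : (0 < N)%N.
  rewrite -(ltr0n R); have : 0 < c' * N%:R by lra.
  by rewrite pmulr_rgt0.
pose Gp (u : 'I_N * 'I_N) : T2 R := (tpt (u.1%:R / N%:R), tpt (u.2%:R / N%:R)).
have [X hX] := choice (fun u => hfs (Gp u)).
set P1 := (Num.trunc L1).+1. set P2 := (Num.trunc L2).+1.
pose h (u : 'I_N * 'I_N) : 'I_P1 * 'I_P2 :=
  (inord (Num.trunc (P1%:R * frac (ga k1 m1 k2 m2 (X u)))),
   inord (Num.trunc (P2%:R * frac (gb k1 m1 k2 m2 (X u))))).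
have tltP : forall (L : R) (a : R), 0 <= L ->
    (Num.trunc ((Num.trunc L).+1%:R * frac a) < (Num.trunc L).+1)%N.
  move=> L a hL; rewrite ltnS truncn_le_nat.
  have := frac_lt1 a; have := frac_ge0 a.
  have : 0 < (Num.trunc L).+1%:R :> R by rewrite ltr0n.
  nra.
have hinj : injective h.
  move=> u v huv; apply: contrapT => hne.
  case: huv => e1' e2'.
  have e1 := congr1 val e1'; have e2 := congr1 val e2'.
  rewrite /= !inordK in e1 e2; try (apply: tltP; lra).
  have c1 := cell_close (ltn0Sn _) e1.
  have c2 := cell_close (ltn0Sn _) e2.
  have P1L : L1 <= P1%:R by apply: ltW; exact: truncnS_gt.
  have P2L : L2 <= P2%:R by apply: ltW; exact: truncnS_gt.
  have r1 : L1 * nrm (ga k1 m1 k2 m2 (X u) - ga k1 m1 k2 m2 (X v)) < 1.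
    apply: le_lt_trans c1; apply: ler_wpM2r => //; exact: nrm_ge0.
  have r2 : L2 * nrm (gb k1 m1 k2 m2 (X u) - gb k1 m1 k2 m2 (X v)) < 1.
    apply: le_lt_trans c2; apply: ler_wpM2r => //; exact: nrm_ge0.
  have w1 := g1 (X u) (X v).
  have hsep : c - 2 * A <= tau * d2 (f (X u)) (f (X v)).
    have hu := hX u; have hv := hX v.
    have [hne1|hne2] : (u.1 : nat) <> v.1 \/ (u.2 : nat) <> v.2.
      case: (eqVneq (u.1 : nat) v.1) => [e|]; last by move/eqP; left.
      right => e'; apply: hne.
      rewrite (surjective_pairing u) (surjective_pairing v).
      by congr pair; apply: val_inj.
    + apply: le_trans (_ : tau * d1 (f (X u)).1 (f (X v)).1 <= _); last first.
        by apply: ler_wpM2l; [exact: ltW | exact: d2_ge1].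
      rewrite d1E; apply: (@sep_coord tau A c N _ _ (frac (u.1%:R / N%:R)) (frac (v.1%:R / N%:R))) => //; last exact: ltW.
      * by rewrite nrm_frac; apply: grid_sep.
      * apply: le_trans hu; apply: ler_wpM2l; [exact: ltW|].
        exact: (d2_ge1 (f (X u)) (Gp u)).
      * apply: le_trans hv; apply: ler_wpM2l; [exact: ltW|].
        exact: (d2_ge1 (f (X v)) (Gp v)).
    + apply: le_trans (_ : tau * d1 (f (X u)).2 (f (X v)).2 <= _); last first.
        by apply: ler_wpM2l; [exact: ltW | exact: d2_ge2].
      rewrite d1E; apply: (@sep_coord tau A c N _ _ (frac (u.2%:R / N%:R)) (frac (v.2%:R / N%:R))) => //; last exact: ltW.
      * by rewrite nrm_frac; apply: grid_sep.
      * apply: le_trans hu; apply: ler_wpM2l; [exact: ltW|].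
        exact: (d2_ge2 (f (X u)) (Gp u)).
      * apply: le_trans hv; apply: ler_wpM2l; [exact: ltW|].
        exact: (d2_ge2 (f (X v)) (Gp v)).
  have := hfd (X u) (X v); case/andP => _ hup.
  have : 4 * C <= C * warped_dist alpha t (X u) (X v) by rewrite /c in hsep; lra.
  move=> hh; have hW4 : 4 <= warped_dist alpha t (X u) (X v) by nra.
  lra.
have := leq_card h hinj; rewrite !card_prod !card_ord => hcard.
have hcardR : N%:R * N%:R <= P1%:R * P2%:R :> R by rewrite -!natrM ler_nat.
have hP1 : P1%:R <= L1 + 1 :> R.
  by rewrite /P1 -[(Num.trunc L1).+1%:R]natr1 lerD2r truncn_le; lra.
have hP2 : P2%:R <= L2 + 1 :> R.
  by rewrite /P2 -[(Num.trunc L2).+1%:R]natr1 lerD2r truncn_le; lra.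
have hNpos : 0 < N%:R :> R by rewrite ltr0n.
have s1 : P1%:R * P2%:R <= (L1 + 1) * (L2 + 1) :> R.
  apply: ler_pM => //; exact: ler0n.
have hR01 : 1 <= R0 by rewrite /R0; lra.
have hL21 : 1 <= L2 by lra.
have s2 : (L1 + 1) * (L2 + 1) <= 4 * (L1 * L2).
  have : 0 <= (L1 - 1) * (L2 - 1) by apply: mulr_ge0; lra.
  nra.
have s3 : R0 * (L1 * L2) <= L2 * L2 by nra.
have s4 : L2 * L2 < (c' * N%:R) * (c' * N%:R) by nra.
have s5 : R0 * (N%:R * N%:R) < 4 * c' ^+ 2 * (N%:R * N%:R).
  have : R0 * (N%:R * N%:R) <= 4 * (L2 * L2) by nra.
  rewrite expr2; nra.
have : R0 < 4 * c' ^+ 2.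
  have hNN : 0 < N%:R * N%:R :> R by apply: mulr_gt0.
  by rewrite -(ltr_pM2r hNN).
rewrite /R0; lra.
Qed.

End Pack.

Section Nec.
Variable R : realType.
Local Open Scope classical_set_scope.
Variable alpha : R.
Hypothesis h0 : 0 < alpha.
Hypothesis h1 : alpha < 1.

Lemma rat_thin (r : rat) : alpha = ratr r ->
  (forall R0 : R, 0 < R0 -> exists t : R, exists k1 m1 k2 m2 : int, exists L1 L2 : R,
     0 < t /\ (k1 * m2 - k2 * m1) * (k1 * m2 - k2 * m1) = 1 /\ 1 <= L1 /\ R0 <= L2 /\
     R0 * L1 <= L2 /\ `|k1%:~R| <= L1 /\ `|k2%:~R| <= L2 /\
     t * `|k1%:~R * alpha + m1%:~R| <= L1 /\
     t * `|k2%:~R * alpha + m2%:~R| <= L2 /\ L1 * L2 <= t).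
Proof.
move=> hr R0 hR0.
set p := numq r; set d := denq r.
have hd : (0 < d)%R := denq_gt0 r.
have [u [v huv]] := Bezoutz p d.
have hg : gcdz p d = 1.
  rewrite /gcdz; have := coprime_num_den r; rewrite /coprime => /eqP ->; by [].
rewrite hg in huv.
set D : R := d%:~R.
have hD1 : 1 <= D by rewrite /D ler1z; lia.
have hDp : 0 < D by lra.
have ea : alpha = p%:~R / D by rewrite hr.
set U : R := `|u%:~R|.
have hU : 0 <= U by exact: normr_ge0.
exists (D * D * (R0 + U + 1)), d, (- p), u, v, D, (D * (R0 + U + 1)).
have e1 : d%:~R * alpha + (- p)%:~R = 0.
  by rewrite ea intrN -/D mulrC -mulrA mulVf ?gt_eqF // mulr1 subrr.
have e2 : u%:~R * alpha + v%:~R = D^-1.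
  have : (u * p + v * d)%:~R = (1 : R) by rewrite huv.
  rewrite intrD !intrM -/D => h.
  rewrite ea (_ : u%:~R * (p%:~R / D) + v%:~R = (u%:~R * p%:~R + v%:~R * D) / D).
    by rewrite h div1r.
  by field; rewrite gt_eqF.
split; first by apply: mulr_gt0; [apply: mulr_gt0|]; lra.
split.
  have e : d * v - u * - p = 1 by rewrite -huv; ring.
  by rewrite e.
split => //.
split; first by nra.
split; first by nra.
split; first by rewrite /D ger0_norm // ler0z; lia.
split; first by rewrite -/U; nra.
split; first by rewrite e1 normr0 mulr0; lra.
split.
  rewrite e2 ger0_norm ?invr_ge0; last lra.
  have -> : D * D * (R0 + U + 1) * D^-1 = D * (R0 + U + 1).
    by field; rewrite gt_eqF.
  by [].
by rewrite mulrA.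
Qed.

Hypothesis hirr : irrational alpha.

Lemma cf_thin : ~ (exists M : int, forall n, cf_digit alpha n <= M) ->
  (forall R0 : R, 0 < R0 -> exists t : R, exists k1 m1 k2 m2 : int, exists L1 L2 : R,
     0 < t /\ (k1 * m2 - k2 * m1) * (k1 * m2 - k2 * m1) = 1 /\ 1 <= L1 /\ R0 <= L2 /\
     R0 * L1 <= L2 /\ `|k1%:~R| <= L1 /\ `|k2%:~R| <= L2 /\
     t * `|k1%:~R * alpha + m1%:~R| <= L1 /\
     t * `|k2%:~R * alpha + m2%:~R| <= L2 /\ L1 * L2 <= t).
Proof.
move=> hnb R0 hR0.
set M := Num.ceil R0.
have hM : R0 <= M%:~R by exact: ceil_ge.
have [n hn] : exists n, M < cf_digit alpha n.
  apply: contrapT => hne; apply: hnb; exists M => n.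
  by rewrite leNgt; apply/negP => h; apply: hne; exists n.
case: n hn => [|i] hn.
  have : cf_digit alpha 0 = 0 by rewrite /= (@floor_def _ _ 0) //= add0r (ltW h0) h1.
  move=> e; rewrite e in hn.
  have : (0 < M)%R by rewrite /M -(ltr_int R) (le_lt_trans _ (lt_le_trans hR0 hM)) // ; lia.
  lia.
set Q1 := Qs alpha i.+1; set Q2 := Qs alpha i.+2.
have q1 : 1 <= Q1%:~R :> R by rewrite ler1z; exact: Qs_ge1.
have q0 : 0 <= (Qs alpha i)%:~R :> R by rewrite ler0z; exact: Qs_ge0.
have ha : R0 + 1 <= (cf_digit alpha i.+1)%:~R.
  have : (M + 1 <= cf_digit alpha i.+1)%R by lia.
  rewrite -(ler_int R) intrD => h; lra.
have eQ2 : Q2%:~R = (cf_digit alpha i.+1)%:~R * Q1%:~R + (Qs alpha i)%:~R :> R.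
  by rewrite /Q2 QsSS intrD intrM.
have q2 : (cf_digit alpha i.+1)%:~R * Q1%:~R <= Q2%:~R :> R by rewrite eQ2; lra.
have q21 : Q1%:~R <= Q2%:~R :> R by rewrite ler_int; exact: Qs_mono.
have q23 : Q2%:~R <= (Qs alpha i.+3)%:~R :> R by rewrite ler_int; exact: Qs_mono.
exists (Q1%:~R * Q2%:~R), Q1, (- Ps alpha i.+1), Q2, (- Ps alpha i.+2), Q1%:~R, Q2%:~R.
have hE1 : Q1%:~R * alpha + (- Ps alpha i.+1)%:~R = Ev alpha i.+1 by rewrite /Ev intrN.
have hE2 : Q2%:~R * alpha + (- Ps alpha i.+2)%:~R = Ev alpha i.+2 by rewrite /Ev intrN.
have eb1 := err_bound h0 h1 hirr i.+1.
have eb2 := err_bound h0 h1 hirr i.+2.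
have n1 := normr_ge0 (Ev alpha i.+1). have n2 := normr_ge0 (Ev alpha i.+2).
split; first by apply: mulr_gt0; lra.
split.
  have := dets_sq alpha i.+1; rewrite /dets -/Q1 -/Q2 => h.
  rewrite -h; ring.
split => //.
split; first by nra.
split; first by nra.
split; first by rewrite ger0_norm; lra.
split; first by rewrite ger0_norm; lra.
split.
  rewrite hE1; have : Q2%:~R * `|Ev alpha i.+1| <= 1 by [].
  nra.
split.
  rewrite hE2; have : Q2%:~R * `|Ev alpha i.+2| <= 1 by nra.
  nra.
by [].
Qed.

End Nec.

Lemma irr_eq (R : realType) (alpha : R) : Defs.irrational alpha <-> reals.irrational alpha.
Proof.
split.
- move=> h [q _ e]; apply: h; exists q; by rewrite e.
- move=> h [q e]; apply: h; exists q => //.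
Qed.

End Helpers.
Import Helpers.
Unset Implicit Arguments.

Theorem theoremA1 (R : realType) (alpha : R) (h0 : 0 < alpha) (h1 : alpha < 1) :
  families_qi (fun t => @warped_dist R alpha t)
              (fun tau (p q : T2 R) => tau * d2 p q)
  <-> restricted alpha.
Proof.
split.
- move=> hqi.
  have hirr : Defs.irrational alpha.
    move=> [r hr]. have := thin_not_qi (rat_thin h0 h1 hr). apply. exact: hqi.
  split => //.
  have hirr' := proj1 (irr_eq alpha) hirr.
  apply: contrapT => hnb. have := thin_not_qi (cf_thin h0 h1 hirr' hnb). apply. exact: hqi.
- case=> hirr [M hM]; exact: (dir_suff h0 h1 (proj1 (irr_eq alpha) hirr) hM).
Qed.
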